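(* Let $2\le n_1\le n_2\le n_3$. Then $2K_1\uplus Q(n_1,n_2,n_3)$ has a $4$-placement in which both isolated vertices and all nodes of $Q(n_1,n_2,n_3)$ are $4$-placed.
   Context: $\uplus$ denotes vertex-disjoint union and $2K_1$ is two isolated vertices. $Q(n_1,\dots,n_t)$ ($1\le n_1\le\cdots\le n_t$) is the tree obtained from the star with centre $v$ and $t$ leaves by replacing each leaf with a path $v^i_1v^i_2\cdots v^i_{n_i}$, where $v$ is adjacent to $v^i_1$. A leaf is a vertex of degree 1; a node is a vertex of degree at least 2 adjacent to a leaf. For a graph $H$ on $m$ vertices, a $k$-placement of $H$ is a $k$-tuple $(\phi_1,\dots,\phi_k)$ of bijections $\phi_i:V(H)\to V(K_m)$ with pairwise disjoint edge sets $\phi_i(E(H))$; a vertex $v$ is $k$-placed if $\phi_i(v)\ne\phi_j(v)$ for all $i\neq j$. *)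

(* Defs.v *)
From mathcomp Require Import all_boot all_fingroup.
Set Implicit Arguments. Unset Strict Implicit. Unset Printing Implicit Defensive.

(* Labelling of 2K_1 ⊎ Q(n_1,...,n_t), ns = [:: n_1; ...; n_t]  (all n_i >= 1):
   vertex 0            = centre v
   arm i (0-based)     = vertices arm_start ns i .. arm_end ns i, in path order
                         (v^i_1 = arm_start ns i, v^i_{n_i} = arm_end ns i)
   vertices sumn ns + 1, sumn ns + 2 = the two isolated vertices. *)
Definition arm_start (ns : seq nat) (i : nat) : nat := (sumn (take i ns)).+1.
Definition arm_end (ns : seq nat) (i : nat) : nat := sumn (take i.+1 ns).

Definition qadj (ns : seq nat) (x y : nat) : bool :=
  ((x == 0) && has (fun i => y == arm_start ns i) (iota 0 (size ns)))
  || [&& y == x.+1, 0 < x, y <= sumn ns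
       & ~~ has (fun i => x == arm_end ns i) (iota 0 (size ns))].

Definition Vx (ns : seq nat) := 'I_(sumn ns + 3).

Definition hedge (ns : seq nat) : rel (Vx ns) :=
  fun x y => qadj ns x y || qadj ns y x.

Arguments hedge : clear implicits.

Definition deg (T : finType) (e : rel T) (x : T) : nat := #|[set y | e x y]|.
Definition is_leaf (T : finType) (e : rel T) (x : T) : bool := deg e x == 1.
Definition is_node (T : finType) (e : rel T) (x : T) : bool :=
  (2 <= deg e x) && [exists y, e x y && is_leaf e y].

(* a k-placement of the graph (T, e) into K_{|T|} (vertex set identified with T):
   k bijections whose edge images are pairwise disjoint (e symmetric). *)
Definition is_placement (T : finType) (k : nat) (e : rel T)
    (phi : 'I_k -> {perm T}) : Prop :=
  forall i j : 'I_k, i != j ->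
  forall x y x' y' : T, e x y -> e x' y' ->
    ~ (phi i x = phi j x' /\ phi i y = phi j y').

Definition k_placed (T : finType) (k : nat) (phi : 'I_k -> {perm T}) (x : T) : Prop :=
  forall i j : 'I_k, i != j -> phi i x != phi j x.

(* Main.v *)
Require Import Defs.
From mathcomp Require Import all_boot all_fingroup.
From mathcomp Require Import zify.

Definition z1 (n1 L p : nat) := if p %% 2 == n1 %% 2 then p %/ 2 else L - p %/ 2.
Definition sg (n1 n2 n3 x : nat) : nat :=
  if x == 0 then z1 n1 (n1 + n3) n1
  else if x <= n1 then z1 n1 (n1 + n3) (n1 - x)
  else if x <= n1 + n2 then
    (if (x - n1 - 1) %% 2 == 0 then n1 + n2 + n3 - (x - n1 - 1) %/ 2
     else n1 + n3 + 1 + (x - n1 - 1) %/ 2)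
  else if x <= n1 + n2 + n3 then z1 n1 (n1 + n3) (x - n2)
  else x.

Lemma modDsmall a t m : a < m -> t < m ->
  (a + t) %% m = if a + t < m then a + t else a + t - m.
Proof.
move=> am tm; case: ltnP => h; first by rewrite modn_small.
have -> : a + t = (a + t - m) + m by rewrite subnK.
rewrite modnDr modn_small; lia.
Qed.
Lemma qadj_char n1 n2 n3 x y : qadj [:: n1; n2; n3] x y ->
  (x = 0 /\ (y = 1 \/ y = n1.+1 \/ y = (n1 + n2).+1)) \/
  (y = x.+1 /\ 0 < x /\ y <= n1 + n2 + n3 /\ x <> n1 /\ x <> n1 + n2).
Proof.
rewrite /qadj /arm_start /arm_end /= !addn0.
case/orP => [/andP [/eqP -> H]|/and4P [/eqP -> H1 H2 H3]].
- left; split => //. move: H; rewrite ?orbF => /or3P [] /eqP ->; lia.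
- right. move: H3; rewrite ?orbF !negb_or => /and3P [/eqP ? /eqP ? _]. lia.
Qed.

Ltac crunch := rewrite /sg /z1; repeat (case: ifP => /=); intros; lia.

Lemma sg_lt n1 n2 n3 x : 2 <= n1 -> n1 <= n2 -> n2 <= n3 ->
  x < n1 + n2 + n3 + 3 -> sg n1 n2 n3 x < n1 + n2 + n3 + 3.
Proof. move=> *; crunch. Qed.

Lemma sg_inj n1 n2 n3 x y : 2 <= n1 -> n1 <= n2 -> n2 <= n3 ->
  x < n1 + n2 + n3 + 3 -> y < n1 + n2 + n3 + 3 -> sg n1 n2 n3 x = sg n1 n2 n3 y -> x = y.
Proof. move=> ? ? ? ? ?; crunch. Qed.

Definition Z1 (n1 L a b : nat) : Prop :=
  a <> b /\ a <= L /\ b <= L /\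
     (a + b = L \/ (n1 %% 2 = 0 /\ a + b = L + 1) \/ (n1 %% 2 = 1 /\ a + b + 1 = L)).

Definition Tg (n1 n2 n3 a b : nat) : Prop :=
  Z1 n1 (n1 + n3) a b
  \/ (a <> b /\ n1 + n3 + 1 <= a <= n1 + n2 + n3 /\ n1 + n3 + 1 <= b <= n1 + n2 + n3 /\
      (a + b = n1 + n3 + 1 + (n1 + n2 + n3) \/ a + b = n1 + n3 + (n1 + n2 + n3)))
  \/ (a = n1 %/ 2 /\ b = n1 + n2 + n3) \/ (a = n1 + n2 + n3 /\ b = n1 %/ 2).

Lemma Tg_shift n1 n2 n3 a b t : 2 <= n1 -> n1 <= n2 -> n2 <= n3 ->
  ~ (n1 = 2 /\ n2 = 2 /\ n3 = 2) ->
  a < n1 + n2 + n3 + 3 -> b < n1 + n2 + n3 + 3 -> 0 < t < 4 ->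
  Tg n1 n2 n3 a b ->
  Tg n1 n2 n3 ((a + t) %% (n1 + n2 + n3 + 3)) ((b + t) %% (n1 + n2 + n3 + 3)) -> False.
Proof.
move=> h1 h2 h3 h4 ha hb ht.
rewrite !modDsmall //; try lia.
rewrite /Tg /Z1; case: ifP => ?; case: ifP => ?; move=> H1 H2; (case: H1 => [H1|[H1|[H1|H1]]]); (case: H2 => [H2|[H2|[H2|H2]]]); try lia.
Qed.

Lemma Tg_sym n1 n2 n3 a b : Tg n1 n2 n3 a b -> Tg n1 n2 n3 b a.
Proof. rewrite /Tg /Z1; lia. Qed.

Lemma z1_cons n1 L p : p < L -> Z1 n1 L (z1 n1 L p) (z1 n1 L p.+1).
Proof. move=> ?; rewrite /Z1 /z1; case: ifP => ?; case: ifP => ?; lia. Qed.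

Lemma Z1_sym n1 L a b : Z1 n1 L a b -> Z1 n1 L b a.
Proof. rewrite /Z1; lia. Qed.

Lemma sg_arm1 n1 n2 n3 x : 0 < x <= n1 -> sg n1 n2 n3 x = z1 n1 (n1 + n3) (n1 - x).
Proof. case/andP=> a b; rewrite /sg b; case: ifP => //; lia. Qed.

Lemma sg_arm3 n1 n2 n3 x : n1 + n2 < x <= n1 + n2 + n3 ->
  sg n1 n2 n3 x = z1 n1 (n1 + n3) (x - n2).
Proof.
case/andP=> a b; rewrite /sg b; case: ifP => ?; first lia.
case: ifP => ?; first lia. case: ifP => //; lia.
Qed.

Definition z2 n1 n2 n3 k := if k %% 2 == 0 then n1 + n2 + n3 - k %/ 2
     else n1 + n3 + 1 + k %/ 2.

Lemma sg_arm2 n1 n2 n3 x : n1 < x <= n1 + n2 ->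
  sg n1 n2 n3 x = z2 n1 n2 n3 (x - n1 - 1).
Proof.
case/andP=> a b; rewrite /sg b; case: ifP => ?; first lia.
case: ifP => //; lia.
Qed.

Lemma sg_0 n1 n2 n3 : sg n1 n2 n3 0 = z1 n1 (n1 + n3) n1.
Proof. by []. Qed.

Lemma edge_Tg n1 n2 n3 x y : 2 <= n1 -> n1 <= n2 -> n2 <= n3 ->
  qadj [:: n1; n2; n3] x y -> Tg n1 n2 n3 (sg n1 n2 n3 x) (sg n1 n2 n3 y).
Proof.
move=> h1 h2 h3 /qadj_char [[-> [->|[->|->]]]|[-> [H1 [H2 [H3 H4]]]]].
- left; rewrite sg_0 sg_arm1; last lia.
  have := z1_cons n1 (n1 + n3) (n1 - 1) ltac:(lia).
  have -> : (n1 - 1).+1 = n1 by lia.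
  by move/Z1_sym.
- right; right; left. rewrite sg_0 sg_arm2; last lia.
  rewrite /z2 /z1; case: ifP => ?; case: ifP => ?; lia.
- left; rewrite sg_0 sg_arm3; last lia.
  have -> : (n1 + n2).+1 - n2 = n1.+1 by lia.
  apply: z1_cons; lia.
- have [xa|xa] := leqP x n1.
  + left; rewrite !sg_arm1; try lia.
    have -> : n1 - x = (n1 - x.+1).+1 by lia.
    apply: Z1_sym; apply: z1_cons; lia.
  have [xb|xb] := leqP x (n1 + n2).
  + right; left; rewrite !sg_arm2; try lia.
    rewrite /z2; case: ifP => ?; case: ifP => ?; lia.
  + left; rewrite !sg_arm3; try lia.
    have -> : x.+1 - n2 = (x - n2).+1 by lia.
    apply: z1_cons; lia.
Qed.

Definition s222 (x : nat) : nat := nth x [:: 0; 1; 3; 4; 5; 6; 8; 2; 7] x.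
Definition P222 (a b : nat) : Prop :=
  has (fun e => (e == (a, b)) || (e == (b, a)))
    [:: (0, 1); (1, 3); (0, 4); (4, 5); (0, 6); (6, 8)].

Lemma P222_shift a b t : a < 9 -> b < 9 -> 0 < t < 4 -> P222 a b ->
  P222 ((a + t) %% 9) ((b + t) %% 9) -> False.
Proof.
move=> ha hb ht.
have : t = 1 \/ t = 2 \/ t = 3 by lia.
move=> {ht} [->|[->|->]];
(case: a ha => [|[|[|[|[|[|[|[|[|a]]]]]]]]] ha //);
(case: b hb => [|[|[|[|[|[|[|[|[|b]]]]]]]]] hb //); by rewrite /P222.
Qed.

Lemma generic (m : nat) (Hm : 4 < m) (e : rel 'I_m) (s : nat -> nat)
    (P : nat -> nat -> Prop) :
  (forall x, x < m -> s x < m) ->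
  (forall x y, x < m -> y < m -> s x = s y -> x = y) ->
  (forall x y : 'I_m, e x y -> P (s x) (s y)) ->
  (forall a b t, a < m -> b < m -> 0 < t < 4 -> P a b ->
      P ((a + t) %% m) ((b + t) %% m) -> False) ->
  exists phi : 'I_4 -> {perm 'I_m}, is_placement e phi /\ forall x, k_placed phi x.
Proof.
move=> sB sI eP shP.
have m0 : 0 < m by lia.
pose f (i : 'I_4) (x : 'I_m) : 'I_m := Ordinal (ltn_pmod (s x + i) m0).
have finj i : injective (f i).
  move=> x y /(congr1 val) /= /eqP; rewrite eqn_modDr !modn_small ?sB //.
  by move=> /eqP /(sI _ _ (ltn_ord x) (ltn_ord y)) /val_inj.
exists (fun i => perm (finj i)); split.
- move=> i j ij x y x' y' exy exy'; rewrite !permE /=.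
  move=> [/(congr1 val) /= hx /(congr1 val) /= hy].
  have key : forall (i j : 'I_4) (z z' : 'I_m), j < i ->
      (s z + i) %% m = (s z' + j) %% m -> s z' = (s z + (i - j)) %% m.
    move=> i0 j0 z z' ji h.
    have : (s z' == s z + (i0 - j0) %[mod m]).
      by rewrite -(eqn_modDr j0) -addnA subnK ?(ltnW ji) // h.
    by move/eqP; rewrite modn_small ?sB.
  case: (ltngtP j i) => h.
  + apply: (shP (s x) (s y) (i - j)); [exact: sB|exact: sB| |exact: eP|].
    * apply/andP; split; rewrite ?subn_gt0 //; have := ltn_ord i; lia.
    * rewrite -(key _ _ _ _ h hx) -(key _ _ _ _ h hy); exact: eP.
  + apply: (shP (s x') (s y') (j - i)); [exact: sB|exact: sB| |exact: eP|].
    * apply/andP; split; rewrite ?subn_gt0 //; have := ltn_ord j; lia.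
    * rewrite -(key _ _ _ _ h (esym hx)) -(key _ _ _ _ h (esym hy)); exact: eP.
  + by move: ij; rewrite (val_inj h) eqxx.
- move=> x i j ij; rewrite !permE; apply/negP => /eqP /(congr1 val) /= /eqP.
  rewrite eqn_modDl !modn_small; try (have := ltn_ord i; have := ltn_ord j; lia).
  by move=> /eqP /val_inj /eqP; rewrite (negbTE ij).
Qed.

Theorem lemma2p7 (n1 n2 n3 : nat) :
  2 <= n1 -> n1 <= n2 -> n2 <= n3 ->
  exists phi : 'I_4 -> {perm Vx [:: n1; n2; n3]},
    is_placement (hedge [:: n1; n2; n3]) phi /\
    (forall x : Vx [:: n1; n2; n3],
       sumn [:: n1; n2; n3] < x -> k_placed phi x) /\
    (forall x : Vx [:: n1; n2; n3],
       is_node (hedge [:: n1; n2; n3]) x -> k_placed phi x).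
Proof.
move=> h1 h2 h3.
have eqm : sumn [:: n1; n2; n3] + 3 = n1 + n2 + n3 + 3 by rewrite /= addn0 addnA.
suff [phi [H1 H2]] : exists phi : 'I_4 -> {perm Vx [:: n1; n2; n3]},
    is_placement (hedge [:: n1; n2; n3]) phi /\ forall x, k_placed phi x.
  by exists phi; split => //; split => x _; apply: H2.
have [E|NE] := boolP ((n1 == 2) && (n2 == 2) && (n3 == 2)).
- move: eqm; case/andP: E => /andP [/eqP -> /eqP ->] /eqP -> eqm.
  apply: (@generic (sumn [:: 2; 2; 2] + 3) _ (hedge [:: 2; 2; 2]) s222 P222).
  + by [].
  + move=> x; rewrite eqm => hx.
    by case: x hx => [|[|[|[|[|[|[|[|[|x]]]]]]]]] hx.
  + move=> x y; rewrite eqm => hx hy.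
    by case: x hx => [|[|[|[|[|[|[|[|[|x]]]]]]]]] hx;
       case: y hy => [|[|[|[|[|[|[|[|[|y]]]]]]]]] hy.
  + move=> x y /orP [] /qadj_char; rewrite /=.
    * move=> [[-> [->|[->|->]]]|[-> [H1 [H2 [H3 H4]]]]] //.
      by case: (nat_of_ord x) H1 H2 H3 H4 => [|[|[|[|[|[|x']]]]]].
    * move=> [[-> [->|[->|->]]]|[-> [H1 [H2 [H3 H4]]]]] //.
      by case: (nat_of_ord y) H1 H2 H3 H4 => [|[|[|[|[|[|x']]]]]].
  + move=> a b t; rewrite eqm; exact: P222_shift.
- have NE' : ~ (n1 = 2 /\ n2 = 2 /\ n3 = 2).
    by move=> [E1 [E2 E3]]; move: NE; rewrite E1 E2 E3.
  apply: (@generic (sumn [:: n1; n2; n3] + 3) _ (hedge [:: n1; n2; n3]) (sg n1 n2 n3) (Tg n1 n2 n3)).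
  + rewrite eqm; lia.
  + move=> x; rewrite eqm; exact: sg_lt.
  + move=> x y; rewrite eqm; exact: sg_inj.
  + move=> x y /orP [] H; [exact: edge_Tg | apply: Tg_sym; exact: edge_Tg].
  + move=> a b t; rewrite eqm; exact: Tg_shift.
Qed.
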